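(* Let $G$ be a graph with $N\ge 1$ vertices and let $d,n,r$ be positive integers with $d\le n$. Call a sequence $S$ of $k$ vertices of $G$ rare if $|N(S)| \leq (2n)^{-2n}\,t_{K_{r,d}}(G)^{\frac{k}{rd}}N$. Call a sequence $T=(v_1,\ldots,v_r)$ of $r$ vertices of $G$ bad with respect to $k$ if the number of rare sequences of $k$ vertices all of whose entries lie in $N(T)$ is at least $\frac{1}{2n}|N(T)|^k$, and call $T$ good if for every $k$ with $d\le k\le n$ it is not bad with respect to $k$. Then $$\sum_{T \text{ good}} |N(T)|^d \geq \tfrac12 h_{K_{r,d}}(G),$$ where the sum is over all good sequences $T$ of $r$ vertices.
   Context: All graphs are finite and simple. Sequences of vertices may contain repeated vertices. For a sequence $S$ of vertices, the common neighborhood $N(S)$ is the set of vertices adjacent to every vertex of $S$. $h_F(G)$ is the number of homomorphisms from $F$ to $G$ (maps $V(F)\to V(G)$ sending edges to edges), and $t_F(G)=h_F(G)/|V(G)|^{|V(F)|}$. $K_{r,d}$ is the complete bipartite graph with parts of sizes $r$ and $d$. *)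

(* Defs.v *)
From mathcomp Require Import all_boot all_order all_algebra.
From mathcomp Require Import all_classical all_reals.
From mathcomp Require Import exp.
Unset Printing Implicit Defensive.
Import Order.TTheory GRing.Theory Num.Theory.
Local Open Scope ring_scope.

Definition simple_graph {V : finType} (e : rel V) : Prop :=
  symmetric e /\ irreflexive e.

Definition commonN {V : finType} (e : rel V) (S : seq V) : {set V} :=
  [set x | all (fun v => e v x) S].

(* h_{K_{r,d}}(G): homomorphisms from K_{r,d} (parts 'I_r and 'I_d) to G,
   i.e. pairs of maps f : 'I_r -> V, g : 'I_d -> V with every f i adjacent
   to every g j. *)
Definition hom_Krd {V : finType} (e : rel V) (r d : nat) : nat :=
  #|[set fg : {ffun 'I_r -> V} * {ffun 'I_d -> V} |
      [forall i, forall j, e (fg.1 i) (fg.2 j)]]|.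

Definition t_Krd (R : realType) {V : finType} (e : rel V) (r d : nat) : R :=
  (hom_Krd e r d)%:R / (#|V|%:R ^+ (r + d)).

Definition rare (R : realType) {V : finType} (e : rel V) (n r d k : nat)
    (S : k.-tuple V) : bool :=
  (#|commonN e S|%:R : R) <=
    ((2 * n)%:R ^- (2 * n)) * powR (t_Krd R e r d) (k%:R / (r * d)%:R)
      * #|V|%:R.

Definition num_rare_in (R : realType) {V : finType} (e : rel V) (n r d k : nat)
    (T : seq V) : nat :=
  #|[set S : k.-tuple V | all (fun v => v \in commonN e T) S
                          && rare R e n r d k S]|.

Definition bad (R : realType) {V : finType} (e : rel V) (n r d k : nat)
    (T : r.-tuple V) : bool :=
  (num_rare_in R e n r d k T)%:R >=
    (2 * n)%:R^-1 * (#|commonN e T|%:R ^+ k : R).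

Definition good (R : realType) {V : finType} (e : rel V) (n r d : nat)
    (T : r.-tuple V) : bool :=
  [forall k : 'I_n.+1, (d <= k)%N ==> ~~ bad R e n r d k T].

(* Main.v *)
Require Import Defs.
From mathcomp Require Import all_boot all_order all_algebra.
From mathcomp Require Import all_classical all_reals exp.
From mathcomp Require Import ring lra zify.
Import Order.TTheory GRing.Theory Num.Theory.
Lemma prod_bool_forall (I : finType) (P : pred I) :
  (\prod_(i : I) (P i : nat) = [forall i, P i])%N.
Proof.
have [H|H] := boolP [forall i, P i].
  by rewrite big1 // => i _; rewrite (forallP H).
move/forallPn: H => [i Hi].
by rewrite (bigD1 i) //= (negbTE Hi) mul0n.
Qed.

Lemma sum_ffun_in (W : finType) (m : nat) (A : {set W}) :
  (\sum_(g : {ffun 'I_m -> W}) \prod_(i : 'I_m) (g i \in A : nat) = #|A| ^ m)%N.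
Proof.
rewrite -(bigA_distr_bigA (fun (i : 'I_m) (v : W) => (v \in A : nat))) /=.
rewrite (eq_bigr (fun _ => #|A|)); last first.
  move=> i _; rewrite -sum1_card [RHS]big_mkcond /=.
  by apply: eq_bigr => v _; case: (v \in A).
by rewrite prod_nat_const card_ord.
Qed.

Lemma sum_tuple_ffun (W : finType) (m : nat) (F : m.-tuple W -> nat) :
  (\sum_(t : m.-tuple W) F t = \sum_(g : {ffun 'I_m -> W}) F [tuple g i | i < m])%N.
Proof.
rewrite (reindex (fun g : {ffun 'I_m -> W} => [tuple g i | i < m])) //.
exists (fun t : m.-tuple W => [ffun i => tnth t i]) => g _.
  by apply/ffunP => i; rewrite ffunE tnth_mktuple.
by apply: eq_from_tnth => i; rewrite tnth_mktuple ffunE.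
Qed.

Lemma sum_tuple_in (W : finType) (m : nat) (A : {set W}) :
  (\sum_(t : m.-tuple W) (all (fun v => v \in A) t : nat) = #|A| ^ m)%N.
Proof.
rewrite sum_tuple_ffun -sum_ffun_in; apply: eq_bigr => g _.
rewrite prod_bool_forall; congr nat_of_bool.
apply/all_tnthP/forallP => H i; have := H i; by rewrite tnth_mktuple.
Qed.

Lemma card_set_sum (W : finType) (P : pred W) :
  #|[set x | P x]| = (\sum_(x : W) (P x : nat))%N.
Proof.
rewrite -sum1_card big_mkcond /=; apply: eq_bigr => x _.
by rewrite inE; case: (P x).
Qed.

Lemma in_commonN_tuple (V : finType) (e : rel V) (m : nat) (T : m.-tuple V) x :
  (x \in commonN e T) = [forall i, e (tnth T i) x].
Proof.
rewrite inE; apply/all_tnthP/forallP => H i; exact: H.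
Qed.

Lemma hom_sum (V : finType) (e : rel V) (r d : nat) :
  hom_Krd e r d = (\sum_(T : r.-tuple V) #|commonN e T| ^ d)%N.
Proof.
rewrite /hom_Krd card_set_sum -(pair_bigA _ (fun (f : {ffun 'I_r -> V}) (g : {ffun 'I_d -> V}) => ([forall i, forall j, e (f i) (g j)] : nat))) /= sum_tuple_ffun.
apply: eq_bigr => f _; rewrite -sum_ffun_in; apply: eq_bigr => g _.
rewrite prod_bool_forall; congr nat_of_bool.
apply/forallP/forallP => H.
  move=> j; rewrite in_commonN_tuple; apply/forallP => i.
  by rewrite tnth_mktuple; have /forallP := H i; apply.
move=> i; apply/forallP => j; have := H j.
by rewrite in_commonN_tuple => /forallP /(_ i); rewrite tnth_mktuple.
Qed.

Lemma all_commonN_sym (V : finType) (e : rel V) (S T : seq V) :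
  symmetric e ->
  all (fun v => v \in commonN e T) S = all (fun v => v \in commonN e S) T.
Proof.
move=> He.
apply/allP/allP => H v Hv; rewrite inE; apply/allP => w Hw.
  by have := H w Hw; rewrite inE => /allP /(_ v Hv); rewrite He.
by have := H w Hw; rewrite inE => /allP /(_ v Hv); rewrite He.
Qed.

Lemma rare_count (R : realType) (V : finType) (e : rel V) (n r d k : nat) :
  symmetric e ->
  (\sum_(T : r.-tuple V) num_rare_in R e n r d k T =
   \sum_(S : k.-tuple V | rare R e n r d k S) #|commonN e S| ^ r)%N.
Proof.
move=> He.
rewrite /num_rare_in (eq_bigr (fun T : r.-tuple V => \sum_(S : k.-tuple V)
   (all (fun v => v \in commonN e T) S && rare R e n r d k S : nat))%N); last first.
  by move=> T _; rewrite card_set_sum.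
rewrite exchange_big /= [RHS]big_mkcond /=; apply: eq_bigr => S _.
case: (rare R e n r d k S).
  rewrite -sum_tuple_in; apply: eq_bigr => T _.
  by rewrite andbT all_commonN_sym.
by rewrite big1 // => T _; rewrite andbF.
Qed.

Local Open Scope ring_scope.

Lemma young_pt (R : realType) (y : R) (d k : nat) : (0 < d)%N -> (d < k)%N -> 0 <= y ->
  y ^+ d <= y ^+ k * (d%:R / k%:R) + (1 - d%:R / k%:R).
Proof.
move=> d0 dk y0.
have k0 : (0 < k%:R :> R) by rewrite ltr0n (leq_trans d0 (ltnW dk)).
have d0' : (0 < d%:R :> R) by rewrite ltr0n.
have kd0 : (0 < (k - d)%:R :> R) by rewrite ltr0n subn_gt0.
have := @conjugate_powR R (y ^+ d) 1 (k%:R / d%:R) (k%:R / (k - d)%:R).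
rewrite mulr1 exprn_ge0 // ler01 divr_gt0 // divr_gt0 //.
have -> : (y ^+ d) `^ (k%:R / d%:R) = y ^+ k.
  by rewrite -powR_mulrn // -powRrM mulrC divfK ?gt_eqF // powR_mulrn.
rewrite powR1 /= !invf_div.
have E : (k - d)%:R / k%:R = 1 - d%:R / k%:R :> R.
  by rewrite natrB ?(ltnW dk) // mulrBl divff ?gt_eqF.
rewrite E mul1r; apply => //.
by rewrite addrC subrK.
Qed.

Lemma young_sum (R : realType) (I : finType) (P : pred I) (x : I -> R) (d k : nat) (lam M : R) :
  (0 < d)%N -> (d <= k)%N -> 0 < lam -> (forall i, 0 <= x i) ->
  \sum_(i | P i) x i ^+ k <= lam ^+ k * M -> #|P|%:R <= M ->
  \sum_(i | P i) x i ^+ d <= lam ^+ d * M.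
Proof.
move=> d0 dk l0 x0 Hk HP.
case: (ltnP d k) => [dk'|kd]; last first.
  have ek : k = d by apply/eqP; rewrite eqn_leq kd dk.
  by move: Hk; rewrite ek.
have k0 : (0 < k%:R :> R) by rewrite ltr0n (leq_trans d0 (ltnW dk')).
have lne : lam != 0 by rewrite gt_eqF.
set c := d%:R / k%:R : R.
have c0 : 0 <= c by rewrite divr_ge0.
have c1 : 0 <= 1 - c.
  by rewrite subr_ge0 ler_pdivrMr // mul1r ler_nat ltnW.
have ld0 : 0 < lam ^+ d by rewrite exprn_gt0.
have lk0 : 0 < lam ^+ k by rewrite exprn_gt0.
apply: (le_trans (y := \sum_(i | P i) (lam ^+ d / lam ^+ k * c * x i ^+ k
                                      + lam ^+ d * (1 - c)))).
  apply: ler_sum => i _.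
  have := @young_pt R (x i / lam) d k d0 dk' (divr_ge0 (x0 i) (ltW l0)).
  rewrite !expr_div_n => H.
  have := ler_wpM2l (ltW ld0) H.
  have -> : lam ^+ d * (x i ^+ d / lam ^+ d) = x i ^+ d.
    by rewrite mulrC divfK ?gt_eqF.
  suff -> : lam ^+ d * (x i ^+ k / lam ^+ k * c + (1 - c)) =
            lam ^+ d / lam ^+ k * c * x i ^+ k + lam ^+ d * (1 - c) by [].
  by ring.
rewrite big_split /= -mulr_sumr sumr_const -mulr_natr.
have cA : 0 <= lam ^+ d / lam ^+ k * c by rewrite mulr_ge0 // divr_ge0 // ltW.
apply: (le_trans (lerD (ler_wpM2l cA Hk) (ler_wpM2l (mulr_ge0 (ltW ld0) c1) HP))).
have -> : lam ^+ d / lam ^+ k * c * (lam ^+ k * M) = (lam^+d / lam^+k * lam^+k) * c * M by ring.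
rewrite divfK ?gt_eqF //; rewrite le_eqVlt; apply/orP; left; apply/eqP; ring.
Qed.


Lemma powR_bound (R : realType) (n r d k : nat) :
  (0 < n)%N -> (0 < r)%N -> (0 < d)%N -> (d <= k)%N -> (k <= n)%N ->
  powR ((2 * n)%:R * ((2 * n)%:R ^- (2 * n)) ^+ r) (d%:R / k%:R) <= ((2 * n)%:R : R)^-1.
Proof.
move=> n0 r0 d0 dk kn.
have n2 : (1 <= (2 * n)%:R :> R) by rewrite ler1n; lia.
have n2p : (0 < (2 * n)%:R :> R) by rewrite ltr0n; lia.
set a := ((2 * n)%:R : R)^-1.
have a0 : 0 < a by rewrite invr_gt0.
have a1 : a <= 1 by rewrite invf_le1.
have Hc : (2 * n)%:R * ((2 * n)%:R ^- (2 * n)) ^+ r = a ^+ (2 * n * r - 1) :> R.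
  rewrite -exprVn -exprM.
  have -> : (2 * n * r = (2 * n * r - 1).+1)%N by lia.
  rewrite exprSr mulrCA mulfV ?gt_eqF // mulr1; congr (_ ^+ _); lia.
have Hc2 : a ^+ (2 * n * r - 1) <= a ^+ n.
  have H2 : (2 * n <= 2 * n * r)%N by rewrite leq_pmulr.
  have H3 : (n <= 2 * n * r - 1)%N by lia.
  exact: (ler_wiXn2l (ltW a0) a1 H3).
have k0 : (0 < k%:R :> R) by rewrite ltr0n; lia.
have nR : (0 < n%:R :> R) by rewrite ltr0n.
rewrite Hc.
have hdk : 0 <= d%:R / k%:R :> R by rewrite divr_ge0.
have hc0 : a ^+ (2 * n * r - 1) \in Num.nneg by rewrite nnegrE exprn_ge0 // ltW.
have hn0 : a ^+ n \in Num.nneg by rewrite nnegrE exprn_ge0 // ltW.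
apply: (le_trans (ge0_ler_powR hdk hc0 hn0 Hc2)).
have an : 0 < a ^+ n <= 1 by rewrite exprn_gt0 // exprn_ile1 // ltW.
have H1 : n%:R^-1 <= d%:R / k%:R :> R.
  rewrite ler_pdivlMr // mulrC ler_pdivrMr // -natrM ler_nat.
  have : (n <= d * n)%N by rewrite leq_pmull.
  lia.
apply: (le_trans (ger_powR an H1)).
rewrite -powR_mulrn ?(ltW a0) // -powRrM mulfV ?gt_eqF // powRr1 //; exact: ltW.
Qed.

Lemma per_k (R : realType) (V : finType) (e : rel V) (n r d k : nat) :
  symmetric e -> (0 < #|V|)%N -> (0 < d)%N -> (0 < n)%N -> (0 < r)%N ->
  (d <= k)%N -> (k <= n)%N -> (0 < hom_Krd e r d)%N ->
  \sum_(T : r.-tuple V | bad R e n r d k T) (#|commonN e T|%:R ^+ d : R)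
    <= ((2 * n)%:R)^-1 * (hom_Krd e r d)%:R.
Proof.
move=> He V0 d0 n0 r0 dk kn h0.
set N := (#|V|%:R : R).
set h := ((hom_Krd e r d)%:R : R).
set t := t_Krd R e r d.
have N0 : 0 < N by rewrite ltr0n.
have hp : 0 < h by rewrite ltr0n.
have tE : t = h / N ^+ (r + d) by [].
have t0 : 0 < t by rewrite tE divr_gt0 // exprn_gt0.
have n2p : (0 < (2 * n)%:R :> R) by rewrite ltr0n; lia.
set eps := ((2 * n)%:R ^- (2 * n) : R).
have eps0 : 0 < eps by rewrite invr_gt0 exprn_gt0.
set c := (2 * n)%:R * eps ^+ r.
have c0 : 0 < c by rewrite mulr_gt0 // exprn_gt0.
set rho := eps * powR t (k%:R / (r * d)%:R) * N.
have rho0 : 0 <= rho by rewrite mulr_ge0 ?mulr_ge0 ?powR_ge0 // ltW.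
set lam := powR c k%:R^-1 * powR t d%:R^-1 * N.
have lam0 : 0 < lam by rewrite mulr_gt0 ?mulr_gt0 ?powR_gt0.
have k0 : (0 < k%:R :> R) by rewrite ltr0n; lia.
have d0' : (0 < d%:R :> R) by rewrite ltr0n.
have r0' : (0 < r%:R :> R) by rewrite ltr0n.
have Hrare : \sum_(T : r.-tuple V) (num_rare_in R e n r d k T)%:R <= rho ^+ r * N ^+ k.
  rewrite -natr_sum rare_count // natr_sum.
  apply: (le_trans (y := \sum_(S : k.-tuple V | rare R e n r d k S) rho ^+ r)).
    apply: ler_sum => S HS; rewrite natrX; apply: lerXn2r => //.
    by rewrite nnegrE ler0n.
  have -> : rho ^+ r * N ^+ k = \sum_(S : k.-tuple V) rho ^+ r.
    by rewrite sumr_const card_tuple -mulr_natr natrX.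
  rewrite [X in _ <= X](bigID (rare R e n r d k)) /= lerDl sumr_ge0 //; last first.
    by move=> S _; rewrite exprn_ge0.
have Hbad : \sum_(T : r.-tuple V | bad R e n r d k T) (#|commonN e T|%:R ^+ k : R)
    <= lam ^+ k * N ^+ r.
  apply: (le_trans (y := \sum_(T : r.-tuple V | bad R e n r d k T)
                           (2 * n)%:R * (num_rare_in R e n r d k T)%:R)).
    apply: ler_sum => T; rewrite /bad => HT.
    by rewrite -ler_pdivrMl // mulrC.
  apply: (le_trans (y := \sum_(T : r.-tuple V)
                           (2 * n)%:R * (num_rare_in R e n r d k T)%:R)).
    rewrite [X in _ <= X](bigID (bad R e n r d k)) /= lerDl sumr_ge0 //.
    by move=> T _; rewrite mulr_ge0 // ltW.
  rewrite -mulr_sumr; apply: (le_trans (ler_wpM2l (ltW n2p) Hrare)).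
  have Ht : powR t (k%:R / (r * d)%:R) ^+ r = powR t (k%:R / d%:R).
    rewrite -powR_mulrn ?powR_ge0 // -powRrM natrM; congr powR.
    by field; rewrite !gt_eqF.
  have Hc : powR c k%:R^-1 ^+ k = c.
    by rewrite -powR_mulrn ?powR_ge0 // -powRrM mulVf ?gt_eqF // powRr1 // ltW.
  have Ht2 : powR t d%:R^-1 ^+ k = powR t (k%:R / d%:R).
    by rewrite -powR_mulrn ?powR_ge0 // -powRrM mulrC.
  rewrite /lam /rho !exprMn Ht Hc Ht2 /c.
  rewrite le_eqVlt; apply/orP; left; apply/eqP; ring.
have Hcard : (#|[pred T : r.-tuple V | bad R e n r d k T]|%:R : R) <= N ^+ r.
  by rewrite -natrX ler_nat -card_tuple max_card.
have := @young_sum R _ (fun T => bad R e n r d k T)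
          (fun T => (#|commonN e T|%:R : R)) d k lam (N ^+ r) d0 dk lam0
          (fun T => ler0n _ _) Hbad Hcard.
move=> /le_trans; apply.
have Hc : powR c k%:R^-1 ^+ d = powR c (d%:R / k%:R).
  by rewrite -powR_mulrn ?powR_ge0 // -powRrM mulrC.
have Ht : powR t d%:R^-1 ^+ d = t.
  by rewrite -powR_mulrn ?powR_ge0 // -powRrM mulVf ?gt_eqF // powRr1 // ltW.
have -> : lam ^+ d * N ^+ r = powR c (d%:R / k%:R) * h.
  rewrite /lam !exprMn Hc Ht tE exprD.
  by field; rewrite !expf_neq0 // gt_eqF.
apply: ler_wpM2r; first exact: ltW.
exact: powR_bound.
Qed.

Theorem lemma2p1 (R : realType) (V : finType) (e : rel V) (n r d : nat) :
  simple_graph e -> (0 < #|V|)%N ->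
  (0 < d)%N -> (0 < n)%N -> (0 < r)%N -> (d <= n)%N ->
  \sum_(T : r.-tuple V | good R e n r d T) (#|commonN e T|%:R ^+ d : R)
    >= 2^-1 * (hom_Krd e r d)%:R.
Proof.
move=> [He _] V0 d0 n0 r0 dn.
have [h0|hpos] := posnP (hom_Krd e r d).
  by rewrite h0 mulr0 sumr_ge0 // => T _; rewrite exprn_ge0.
have Hh : ((hom_Krd e r d)%:R : R) = \sum_(T : r.-tuple V) (#|commonN e T|%:R ^+ d : R).
  by rewrite hom_sum natr_sum; apply: eq_bigr => T _; rewrite natrX.
have n2p : (0 < (2 * n)%:R :> R) by rewrite ltr0n; lia.
have Key : \sum_(T : r.-tuple V | ~~ good R e n r d T) (#|commonN e T|%:R ^+ d : R)
    <= 2^-1 * (hom_Krd e r d)%:R.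
  apply: (le_trans (y := \sum_(T : r.-tuple V | ~~ good R e n r d T)
      \sum_(k : 'I_n.+1 | (d <= k)%N && bad R e n r d k T) (#|commonN e T|%:R ^+ d : R))).
    apply: ler_sum => T; rewrite /good negb_forall => /existsP [k].
    rewrite negb_imply negbK => /andP [dk bk].
    rewrite (bigD1 k) /=; last by rewrite dk bk.
    by rewrite lerDl sumr_ge0 // => i _; rewrite exprn_ge0.
  apply: (le_trans (y := \sum_(T : r.-tuple V)
      \sum_(k : 'I_n.+1 | (d <= k)%N && bad R e n r d k T) (#|commonN e T|%:R ^+ d : R))).
    rewrite [X in _ <= X](bigID (fun T => ~~ good R e n r d T)) /= lerDl sumr_ge0 //.
    by move=> T _; rewrite sumr_ge0 // => i _; rewrite exprn_ge0.
  rewrite -(exchange_big_dep xpredT) //=.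
  apply: (le_trans (y := \sum_(k : 'I_n.+1 | (d <= k)%N)
                          ((2 * n)%:R^-1 * (hom_Krd e r d)%:R))).
    apply: ler_sum => k dk; apply: per_k => //.
    by rewrite -ltnS ltn_ord.
  rewrite sumr_const -[X in X <= _]mulr_natr.
  have Hc : (#|[pred k : 'I_n.+1 | (d <= k)%N]| <= n)%N.
    have Hs : [pred k : 'I_n.+1 | (d <= k)%N] \subset [set~ (ord0 : 'I_n.+1)].
      apply/fintype.subsetP => k; rewrite !inE => dk.
      apply/eqP => k0; move: dk; rewrite k0 /=; lia.
    by move/subset_leq_card: Hs; rewrite cardsC1 card_ord.
  apply: (le_trans (y := (2 * n)%:R^-1 * (hom_Krd e r d)%:R * n%:R)).
    apply: ler_wpM2l; first by rewrite mulr_ge0 // ltW // invr_gt0.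
    by rewrite ler_nat; exact: Hc.
  rewrite le_eqVlt; apply/orP; left; apply/eqP.
  by rewrite natrM; field; rewrite gt_eqF // ltr0n.
have Split : \sum_(T : r.-tuple V) (#|commonN e T|%:R ^+ d : R) =
   \sum_(T : r.-tuple V | good R e n r d T) (#|commonN e T|%:R ^+ d : R) +
   \sum_(T : r.-tuple V | ~~ good R e n r d T) (#|commonN e T|%:R ^+ d : R).
  by rewrite (bigID (good R e n r d)).
move: Key Split; rewrite Hh.
set A := \sum_(T | good R e n r d T) _.
set B := \sum_(T | ~~ good R e n r d T) _.
move=> Key Split; lra.
Qed.
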